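(* Let $\alpha>-1$, $0\le\gamma<2+\alpha$, $\beta\in\{0,1/3\}$, and let $\sigma$ be a weight on $\mathcal H$. There is a constant $C>0$ (independent of $f$ and $\lambda$) such that for every $f$ and every $\lambda>0$, $$|\{z\in\mathcal H:\mathcal M^{d,\beta}_{\sigma,\alpha,\gamma}f(z)>\lambda\}|_{\sigma,\alpha}\le C\left(\frac1\lambda\int_{\mathcal H}|f|\sigma\,dV_\alpha\right)^{\frac{2+\alpha}{2+\alpha-\gamma}}.$$
   Context: $\mathcal H=\{x+iy:x\in\mathbb R,\ y>0\}$; for $\alpha>-1$, $dV_\alpha(x+iy)=y^\alpha dx\,dy$. A weight is a nonnegative locally integrable function; $|E|_{\sigma,\alpha}=\int_E\sigma dV_\alpha$. For an interval $I$, $Q_I=\{x+iy:x\in I,0<y<|I|\}$. For $\beta\in\{0,1/3\}$, the dyadic grid is $\mathcal D^\beta=\{2^j([0,1)+m+(-1)^j\beta): m\in\mathbb Z, j\in\mathbb Z\}$. The dyadic weighted fractional maximal function is $\mathcal M^{d,\beta}_{\sigma,\alpha,\gamma}f(z)=\sup_{I\in\mathcal D^\beta,\ z\in Q_I}\frac{1}{|Q_I|_{\sigma,\alpha}^{1-\frac{\gamma}{2+\alpha}}}\int_{Q_I}|f|\sigma\,dV_\alpha$. *)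

(* Defs.v *)
From HB Require Import structures.
From mathcomp Require Import all_boot all_order all_algebra.
From mathcomp Require Import all_classical all_reals all_analysis.
Set Implicit Arguments. Unset Strict Implicit. Unset Printing Implicit Defensive.
Import Order.TTheory GRing.Theory Num.Theory.
Import numFieldNormedType.Exports.
Local Open Scope classical_set_scope.
Local Open Scope ring_scope.

Section Defs.
Variable R : realType.

Definition leb2 := (@lebesgue_measure R \x @lebesgue_measure R)%E.

(* The upper half-plane H = {x + i y : y > 0}, points as pairs (x, y). *)
Definition Hplane : set (R * R) := [set z | 0 < z.2].

(* int_E g sigma dV_alpha, with dV_alpha(x+iy) = y^alpha dx dy. *)
Definition wint (alpha : R) (sigma : R * R -> R) (E : set (R * R))
  (g : R * R -> R) : \bar R :=
  (\int[leb2]_(z in E) (g z * sigma z * z.2 `^ alpha)%:E)%E.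

Definition wmeas (alpha : R) (sigma : R * R -> R) (E : set (R * R)) : \bar R :=
  wint alpha sigma E (fun _ => 1).

Definition weight (sigma : R * R -> R) : Prop :=
  [/\ measurable_fun Hplane sigma,
      (forall z, Hplane z -> 0 <= sigma z) &
      (forall K : set (R * R), compact K -> K `<=` Hplane ->
         (\int[leb2]_(z in K) (sigma z)%:E < +oo)%E)].

(* The dyadic interval I = 2^j([0,1) + m + (-1)^j beta) of D^beta,
   with j, m integers; its length is |I| = 2^j. *)
Definition dyadic_left (beta : R) (j m : int) : R :=
  (2%:R ^ j) * (m%:~R + (-1) ^ j * beta).
Definition dyadic_len (j : int) : R := 2%:R ^ j.
Definition dyadic_int (beta : R) (j m : int) : set R :=
  [set x | dyadic_left beta j m <= x < dyadic_left beta j m + dyadic_len j].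

Definition Qbox (beta : R) (j m : int) : set (R * R) :=
  [set z | dyadic_int beta j m z.1 /\ 0 < z.2 < dyadic_len j].

(* The averaged quantity |Q_I|^{-(1 - gamma/(2+alpha))} int_{Q_I} |f| sigma dV_alpha,
   with the convention that it is 0 when |Q_I|_{sigma,alpha} is 0 or +oo. *)
Definition frac_avg (alpha gamma : R) (sigma f : R * R -> R)
  (Q : set (R * R)) : \bar R :=
  let mQ := wmeas alpha sigma Q in
  if (mQ == 0%E) || (mQ == +oo%E) then 0%E
  else (wint alpha sigma Q (fun z => `|f z|%R) *
        ((fine mQ) `^ (- (1 - gamma / (2 + alpha))))%:E)%E.

Definition dyadic_max (beta alpha gamma : R) (sigma f : R * R -> R)
  (z : R * R) : \bar R :=
  ereal_sup [set frac_avg alpha gamma sigma f (Qbox beta jm.1 jm.2)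
            | jm in [set jm : int * int | Qbox beta jm.1 jm.2 z]].

End Defs.

(* Main.v *)
Require Import Defs.
From HB Require Import structures.
From mathcomp Require Import all_boot all_order all_algebra.
From mathcomp Require Import all_classical all_reals all_analysis measurable_realfun.
From mathcomp Require Import ring lra zify.
Import Order.TTheory GRing.Theory Num.Theory.
Import numFieldNormedType.Exports.
Local Open Scope classical_set_scope.
Local Open Scope ring_scope.

Section Dyadic.
Variable R : realType.
Variable beta : R.
Hypothesis hb : beta = 0 \/ beta = 1 / 3.

Lemma sign_cases (j : int) : (-1 : R) ^ j = 1 \/ (-1 : R) ^ j = -1.
Proof.
case: j => n.
  rewrite -exprnP -signr_odd; case: (odd n); [right|left]; by rewrite ?expr1 ?expr0.
rewrite NegzE -exprnN -signr_odd; case: (odd n.+1); [right|left];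
  by rewrite ?expr1 ?expr0 ?invrN1 ?invr1.
Qed.

Lemma dyadic_step (j m : int) : exists n : int,
  dyadic_int beta j m `<=` dyadic_int beta (j + 1) n.
Proof.
set P : R := 2%:R ^ j.
have P0 : 0 < P by apply: exprz_gt0.
set s : R := (-1) ^ j.
have hs : s = 1 \/ s = -1 := sign_cases j.
have [e he] : exists e : int, e%:~R = 3 * s * beta.
  case: hb => ->; first by exists 0; rewrite mulr0.
  case: hs => ->; [exists 1 | exists (-1)]; rewrite ?mulr1n ?mulrN1z; lra.
pose t := m + e.
exists (t %/ 2)%Z.
have ht := divz_eq t 2.
have r0 : (0 <= (t %% 2)%Z) by apply: modz_ge0.
have r1 : ((t %% 2)%Z < 2) by apply: ltz_pmod.
have r1' : ((t %% 2)%Z <= 1) by move: r1; rewrite -[2]/(1 + 1)%Z ltzD1.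
set n := (t %/ 2)%Z in ht *.
set r := (t %% 2)%Z in ht r0 r1' *.
have hR : (m%:~R + e%:~R = 2 * n%:~R + r%:~R :> R).
  by rewrite -intrD -/t {1}ht intrD intrM mulrC.
rewrite he in hR.
have r0R : (0 <= r%:~R :> R) by rewrite ler0z.
have r1R : (r%:~R <= 1 :> R) by have := r1'; rewrite -(ler_int R) /=.
have L : dyadic_left beta (j + 1) n = P * (m%:~R + s * beta - r%:~R).
  rewrite /dyadic_left expfzDr ?pnatr_eq0 // expfzDr ?oppr_eq0 ?oner_eq0 //.
  rewrite -/P -/s !expr1z.
  have -> : (n%:~R : R) = (m%:~R + 3 * s * beta - r%:~R) / 2 by rewrite hR; field.
  by field.
have Lj : dyadic_len R (j + 1) = 2 * P :> R.
  by rewrite /dyadic_len expfzDr ?pnatr_eq0 // expr1z mulrC.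
move=> x; rewrite /dyadic_int /= L Lj /dyadic_left /dyadic_len -/P -/s.
move=> /andP[h1 h2]; apply/andP; split.
  have : P * r%:~R >= 0 by apply: mulr_ge0 => //; exact: ltW.
  lra.
have : P * r%:~R <= P * 1 by rewrite ler_pM2l.
lra.
Qed.


Lemma dyadic_nest (i : nat) (j m : int) : exists n : int,
  dyadic_int beta j m `<=` dyadic_int beta (j + i%:Z) n.
Proof.
elim: i => [|i [n hn]]; first by exists m; rewrite addr0.
have [n' hn'] := dyadic_step (j + i%:Z) n.
exists n'; rewrite intS addrCA addrC.
by apply: subset_trans hn hn'.
Qed.

Lemma dyadic_nest_le (j k m : int) : j <= k -> exists n : int,
  dyadic_int beta j m `<=` dyadic_int beta k n.
Proof.
move=> jk; have := dyadic_nest `|k - j|%N j m.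
by rewrite gez0_abs ?subr_ge0 // [j + _]addrC subrK.
Qed.

Lemma dyadic_uniq (k n n' : int) (x : R) :
  dyadic_int beta k n x -> dyadic_int beta k n' x -> n = n'.
Proof.
rewrite /dyadic_int /dyadic_left /dyadic_len /=.
set P : R := 2%:R ^ k.
have P0 : 0 < P by apply: exprz_gt0.
set c : R := (-1) ^ k * beta.
move=> /andP[h1 h2] /andP[h3 h4].
have a1 : (n%:~R : R) < (n' + 1)%:~R.
  by rewrite intrD -(ltr_pM2l P0); lra.
have a2 : (n'%:~R : R) < (n + 1)%:~R.
  by rewrite intrD -(ltr_pM2l P0); lra.
move: a1 a2; rewrite !ltr_int !ltzD1 => a1 a2.
by apply/eqP; rewrite eq_le a1 a2.
Qed.

Lemma len_le (j k : int) : j <= k -> dyadic_len R j <= dyadic_len R k.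
Proof. by move=> jk; apply: ler_weXz2l => //; rewrite ler1n. Qed.

Lemma qbox_sub (j k m n : int) : j <= k ->
  dyadic_int beta j m `<=` dyadic_int beta k n ->
  Qbox beta j m `<=` Qbox beta k n.
Proof.
move=> jk hI z [hz /andP[y0 y1]]; split; first exact: hI.
by rewrite y0 /= (lt_le_trans y1) // len_le.
Qed.

Variable good : int -> int -> Prop.

Definition maxi (N j m : int) : Prop :=
  [/\ j <= N, good j m &
   ~ exists k n, [/\ j < k, k <= N, Qbox beta j m `<=` Qbox beta k n & good k n]].

Lemma maxi_disj N j m j' m' z : maxi N j m -> maxi N j' m' ->
  Qbox beta j m z -> Qbox beta j' m' z -> j = j' /\ m = m'.
Proof.
wlog jj : j m j' m' / j <= j'.
  move=> H; case: (lerP j j') => [jj|jj] h1 h2 q1 q2; first exact: H.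
  by have [-> ->] := H j' m' j m (ltW jj) h2 h1 q2 q1.
move=> [_ _ nm] [j'N g' _] [z1 _] [z2 _].
case: (ltgtP j j') jj => // [jj' _|e _]; last subst j'.
  have [n hn] := dyadic_nest_le j j' m (ltW jj').
  have nm' := dyadic_uniq _ _ _ _ (hn _ z1) z2; subst n.
  exfalso; apply: nm; exists j', m'; split => //.
  exact: qbox_sub (ltW jj') hn.
split; first by []. exact: (dyadic_uniq _ _ _ z.1 z1 z2).
Qed.


Lemma maxi_cover N (d : nat) j m z : N - j <= d%:Z -> j <= N -> good j m ->
  Qbox beta j m z -> exists j' m', maxi N j' m' /\ Qbox beta j' m' z.
Proof.
elim: d j m => [|d IH] j m hd jN g q;
  (case: (pselect (exists k n, [/\ j < k, k <= N, Qbox beta j m `<=` Qbox beta k n & good k n]))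
   => [[k [n [jk kN sub gk]]]|h]; last by exists j, m).
  exfalso; lia.
apply: (IH k n) => //; last exact: sub.
lia.
Qed.

End Dyadic.
Section Meas.
Variable R : realType.

Lemma Hplane_meas : measurable (@Hplane R).
Proof.
have -> : @Hplane R = [set: R] `*` `]0, +oo[%classic.
  by apply/seteqP; split => z /=; rewrite in_itv /= andbT; [move=> h | case].
apply: measurableX => //; exact: measurable_itv.
Qed.

Lemma Qbox_meas beta j m : measurable (@Qbox R beta j m).
Proof.
have -> : Qbox beta j m = `[dyadic_left beta j m, dyadic_left beta j m + dyadic_len R j[%classic
   `*` `]0, dyadic_len R j[%classic.
  by apply/seteqP; split => z /=; rewrite /Qbox /dyadic_int /= !in_itv.
apply: measurableX => //; exact: measurable_itv.
Qed.

Variables (alpha : R) (sigma : R * R -> R).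
Hypothesis ws : weight sigma.

Definition itg (g : R * R -> R) : R * R -> \bar R :=
  fun z => (g z * sigma z * z.2 `^ alpha)%:E.

Lemma integrand_meas (g : R * R -> R) (D : set (R * R)) :
  measurable D -> D `<=` (@Hplane R) -> measurable_fun ((@Hplane R)) g ->
  measurable_fun D (itg g).
Proof.
move=> mD DH mg; apply: (measurable_funS Hplane_meas DH).
apply/measurable_EFinP; apply: measurable_funM; first apply: measurable_funM => //.
  by case: ws.
apply: measurable_funTS.
exact: (measurableT_comp (measurable_powR alpha) measurable_snd).
Qed.

Lemma integrand_ge0 (g : R * R -> R) z : (@Hplane R) z -> 0 <= g z ->
  (0 <= (g z * sigma z * z.2 `^ alpha)%:E)%E.
Proof.
move=> Hz g0; rewrite lee_fin; apply: mulr_ge0; last exact: powR_ge0.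
by apply: mulr_ge0 => //; case: ws => _ s0 _; exact: s0.
Qed.


Lemma wint_mono (g : R * R -> R) (A B : set (R * R)) :
  measurable A -> measurable B -> A `<=` B -> B `<=` (@Hplane R) ->
  measurable_fun (@Hplane R) g -> (forall z, (@Hplane R) z -> 0 <= g z) ->
  (wint alpha sigma A g <= wint alpha sigma B g)%E.
Proof.
move=> mA mB AB BH mg g0; rewrite /wint.
apply: ge0_subset_integral => //.
  exact: integrand_meas.
by move=> z Bz; apply: integrand_ge0; [exact: BH | exact: g0 (BH _ Bz)].
Qed.

End Meas.
Section Real.
Variable R : realType.

Lemma invpow (lam p : R) : 0 < lam -> (lam^-1) `^ p = lam `^ (- p).
Proof.
move=> l0; rewrite powRN.
have h : (lam^-1) `^ p * lam `^ p = 1.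
  by rewrite -powRM ?invr_ge0 ?ltW // mulVf ?gt_eqF // powR1.
have hp : lam `^ p != 0 by rewrite gt_eqF // powR_gt0.
by rewrite -[LHS]mulr1 -(mulfV hp) mulrA h mul1r.
Qed.

Lemma real_core (m a a0 lam p : R) : 0 < m -> 0 <= a -> a <= a0 -> 0 < lam ->
  1 <= p -> lam < a * m `^ (- p^-1) ->
  m <= a0 `^ (p - 1) * lam `^ (- p) * a.
Proof.
move=> m0 a0' aa0 l0 p1 h.
have p0 : 0 < p by lra.
set M := m `^ p^-1.
have M0 : 0 < M by apply: powR_gt0.
have h1 : lam * M < a by rewrite -ltr_pdivlMr // -powRN.
have h2 : M <= a / lam.
  rewrite ler_pdivlMr // mulrC; exact: ltW.
have h3 : m = M `^ p by rewrite -powRrM mulVf ?gt_eqF // powRr1 // ltW.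
have h4 : M `^ p <= (a / lam) `^ p.
  apply: ge0_ler_powR => //; first lra.
    by rewrite nnegrE ltW.
  by rewrite nnegrE; apply: divr_ge0 => //; exact: ltW.
have h5 : (a / lam) `^ p = a `^ p * lam `^ (- p).
  by rewrite powRM // ?invr_ge0 ?ltW // invpow.
have h6 : a `^ p <= a0 `^ (p - 1) * a.
  rewrite -mulr_powRB1 // mulrC ler_wpM2r //.
  apply: ge0_ler_powR => //; rewrite ?nnegrE //; first lra.
  exact: le_trans aa0.
rewrite h3 (le_trans h4) // h5 mulrAC ler_wpM2r //; exact: powR_ge0.
Qed.

Lemma real_final (a0 lam p : R) : 0 <= a0 -> 0 < lam -> 0 < p ->
  a0 `^ (p - 1) * lam `^ (- p) * a0 = (lam^-1 * a0) `^ p.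
Proof.
move=> a00 l0 p0.
rewrite powRM //; last by rewrite invr_ge0 ltW.
have -> : lam^-1 `^ p = lam `^ (-p) := invpow lam p l0.
rewrite -[a0 `^ p](mulr_powRB1 a00 p0); ring.
Qed.

End Real.

Section Main.
Variables (R : realType) (alpha gamma beta : R) (sigma f : R * R -> R) (lambda a0 : R).
Hypotheses (ha : -1 < alpha) (hg0 : 0 <= gamma) (hg : gamma < 2 + alpha)
  (hb : beta = 0 \/ beta = 1 / 3) (ws : weight sigma)
  (mf : measurable_fun (@Hplane R) f) (hl : 0 < lambda)
  (hA : wint alpha sigma (@Hplane R) (fun z => `|f z|%R) = a0%:E).

Let p := (2 + alpha) / (2 + alpha - gamma).
Let c := a0 `^ (p - 1) * lambda `^ (- p).
Let good (j m : int) : Prop :=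
  (lambda%:E < frac_avg alpha gamma sigma f (Qbox beta j m))%E.

Let mfa : measurable_fun (@Hplane R) (fun z => `|f z|%R).
Proof. by apply: measurableT_comp => //; exact: normr_measurable. Qed.

Let fa0 : forall z, (@Hplane R) z -> 0 <= `|f z|.
Proof. by []. Qed.

Let a00 : 0 <= a0.
Proof.
rewrite -lee_fin -hA; apply: integral_ge0 => z Hz.
exact: (@integrand_ge0 R alpha sigma ws (fun z => `|f z|%R)).
Qed.

Let h2a : 0 < 2 + alpha. Proof. by move: ha hg0 hg => *; lra. Qed.
Let h2g : 0 < 2 + alpha - gamma. Proof. by move: ha hg0 hg => *; lra. Qed.

Let p1 : 1 <= p.
Proof. rewrite /p ler_pdivlMr // mul1r. by move: hg0 => *; lra. Qed.

Let hq : 1 - gamma / (2 + alpha) = p^-1.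
Proof.
rewrite /p invf_div; field.
by rewrite gt_eqF.
Qed.

Let QH j m : Qbox beta j m `<=` @Hplane R.
Proof. by move=> z [_ /andP[y0 _]]. Qed.

Lemma cube_bound j m : good j m ->
  (wmeas alpha sigma (Qbox beta j m) <=
   c%:E * wint alpha sigma (Qbox beta j m) (fun z => `|f z|%R))%E.
Proof.
have mQ0 : (0 <= wmeas alpha sigma (Qbox beta j m))%E.
  apply: integral_ge0 => z Qz.
  by apply: (@integrand_ge0 R alpha sigma ws (fun _ => 1)); [exact: QH Qz|].
have aQ0 : (0 <= wint alpha sigma (Qbox beta j m) (fun z => `|f z|%R))%E.
  apply: integral_ge0 => z Qz.
  by apply: (@integrand_ge0 R alpha sigma ws (fun z => `|f z|%R)); [exact: QH Qz|].
have aQA : (wint alpha sigma (Qbox beta j m) (fun z => `|f z|%R) <= a0%:E)%E.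
  rewrite -hA; apply: wint_mono => //; [exact: Qbox_meas | exact: Hplane_meas].
rewrite /good /frac_avg /=.
move: (wmeas alpha sigma (Qbox beta j m)) mQ0 => mQ mQ0.
move: (wint alpha sigma (Qbox beta j m) (fun z => `|f z|%R)) aQ0 aQA => aQ aQ0 aQA.
case: mQ mQ0 => [m'| |] //= mQ0; last first.
  by rewrite lte_fin ltNge (ltW hl).
rewrite eqe; case: ifP => [|/negbT m'0]; first by rewrite lte_fin ltNge (ltW hl).
case: aQ aQ0 aQA => [a| |] // aQ0 aQA.
rewrite -EFinM !lte_fin lee_fin hq => h.
apply: real_core => //.
by move: m'0; rewrite negb_or => /andP[+ _]; rewrite lt_neqAle eq_sym => -> /=; rewrite -lee_fin.
Qed.


Let EN (N : int) : set (R * R) :=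
  [set z | exists j m, [/\ j <= N, good j m & Qbox beta j m z]].
Let F (N : int) (k : nat) : set (R * R) :=
  [set z | exists jm : int * int, [/\ pickle_inv k = Some jm,
     maxi R beta good N jm.1 jm.2 & Qbox beta jm.1 jm.2 z]].

Let F_cases N k : F N k = set0 \/ exists j m, good j m /\ F N k = Qbox beta j m.
Proof.
case E: (pickle_inv k : option (int * int)) => [[j m]|]; last first.
  by left; apply/seteqP; split => z // [jm []]; rewrite E.
case: (pselect (maxi R beta good N j m)) => h.
  right; exists j, m; split; first by case: h.
  apply/seteqP; split => z /=.
    by move=> [jm []]; rewrite E => -[<-].
  by move=> q; exists (j, m); split.
left; apply/seteqP; split => z //=.
by move=> [jm []]; rewrite E => -[<-].
Qed.

Let F_meas N k : measurable (F N k).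
Proof.
by case: (F_cases N k) => [->|[j [m [_ ->]]]]; [exact: measurable0 | exact: Qbox_meas].
Qed.

Let F_triv N : trivIset setT (F N).
Proof.
move=> k k' _ _ [z [[[j m] [e1 h1 q1]] [[j' m'] [e2 h2 q2]]]].
have [/= ej em] := maxi_disj R beta hb good N j m j' m' z h1 h2 q1 q2.
subst j' m'.
have := @pickle_invK (int * int)%type k; rewrite e1 /= => <-.
by have := @pickle_invK (int * int)%type k'; rewrite e2 /= => <-.
Qed.

Let EN_bigcup N : EN N = \bigcup_k F N k.
Proof.
apply/seteqP; split => z.
  move=> [j [m [jN g q]]].
  have hd : N - j <= (`|N - j|%N)%:Z by rewrite gez0_abs // subr_ge0.
  have [j' [m' [h q']]] := maxi_cover R beta good N `|N - j|%N j m z hd jN g q.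
  exists (pickle (j', m')) => //.
  by exists (j', m'); split => //; rewrite pickleK_inv.
by move=> [k _ [jm [_ [jN g _] q]]]; exists jm.1, jm.2; split.
Qed.

Let EN_meas N : measurable (EN N).
Proof. by rewrite EN_bigcup; apply: bigcupT_measurable => k; exact: F_meas. Qed.

Let EN_H N : EN N `<=` @Hplane R.
Proof. by move=> z [j [m [_ _ q]]]; exact: QH q. Qed.


Let c0 : 0 <= c.
Proof. by apply: mulr_ge0; exact: powR_ge0. Qed.

Lemma EN_bound N : (wmeas alpha sigma (EN N) <= (c * a0)%:E)%E.
Proof.
have mU : measurable (\bigcup_k F N k) by rewrite -EN_bigcup.
have UH : \bigcup_k F N k `<=` @Hplane R by rewrite -EN_bigcup.
rewrite /wmeas /wint EN_bigcup.
rewrite ge0_integral_bigcup //; last 2 first.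
- by apply: (integrand_meas R alpha sigma ws (fun _ => 1%R)) => //; exact: measurable_cst.
- by move=> z Uz; apply: (@integrand_ge0 R alpha sigma ws (fun _ => 1)); [exact: UH|].
apply: (@le_trans _ _ (\sum_(k <oo) (c%:E * wint alpha sigma (F N k) (fun z => `|f z|%R)))%E).
  apply: lee_nneseries => [k _ _|k _].
    apply: integral_ge0 => z Fz.
    by apply: (@integrand_ge0 R alpha sigma ws (fun _ => 1)); [apply: UH; exists k|].
  case: (F_cases N k) => [->|[j [m [g ->]]]].
    by rewrite /wint !integral_set0 mule0.
  exact: cube_bound.
rewrite nneseriesZl; last first.
  move=> k _; apply: integral_ge0 => z Fz.
  by apply: (@integrand_ge0 R alpha sigma ws (fun z => `|f z|%R)); [apply: UH; exists k|].
rewrite -ge0_integral_bigcup //; last 2 first.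
- exact: (integrand_meas R alpha sigma ws (fun z => `|f z|%R) _ mU UH mfa).
- by move=> z Uz; apply: (@integrand_ge0 R alpha sigma ws (fun z => `|f z|%R)); [exact: UH|].
rewrite [(c * a0)%:E]EFinM; apply: lee_wpmul2l; first by rewrite lee_fin.
rewrite -hA; apply: (wint_mono R alpha sigma ws (fun z => `|f z|%R)) => //.
exact: Hplane_meas.
all: exact: F_meas.
Qed.


Let E_eq : [set z | @Hplane R z /\ (lambda%:E < dyadic_max beta alpha gamma sigma f z)%E]
  = \bigcup_(N : nat) EN N%:Z.
Proof.
apply/seteqP; split => z.
  move=> [Hz /ereal_sup_gt [y [[j m] /= q <-] ly]].
  exists `|j|%N => //; exists j, m; split => //.
  by rewrite abszE ler_norm.
move=> [N _ [j [m [_ g q]]]]; split; first exact: QH q.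
apply: (lt_le_trans g); apply: ereal_sup_ubound; by exists (j, m).
Qed.

Let nd_EN : nondecreasing_seq (fun N : nat => EN N%:Z).
Proof.
move=> n n' nn'; rewrite subsetEset => z [j [m [jN g q]]].
exists j, m; split => //; apply: (le_trans jN); by rewrite lez_nat.
Qed.

Lemma main_bound : (wmeas alpha sigma
   [set z | @Hplane R z /\ (lambda%:E < dyadic_max beta alpha gamma sigma f z)%E]
   <= (c * a0)%:E)%E.
Proof.
rewrite E_eq /wmeas /wint.
have hc : ((\int[@leb2 R]_(x in EN (i : nat)%:Z) (1 * sigma x * x.2 `^ alpha)%:E)%E @[i --> \oo] -->
    (\int[@leb2 R]_(x in \bigcup_i EN i%:Z) (1 * sigma x * x.2 `^ alpha)%:E)%E).
  refine (@ge0_nondecreasing_set_cvg_integral _ _ R _ _ _ _ _ _ _).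
  - exact: nd_EN.
  - move=> N; exact: EN_meas.
  - move=> N; exact: (integrand_meas R alpha sigma ws (fun _ => 1%R) _ (EN_meas _) (EN_H _) (measurable_cst _)).
  - move=> N z Hz; apply: (@integrand_ge0 R alpha sigma ws (fun _ => 1%R)) => //.
    exact: EN_H Hz.
rewrite -(cvg_lim _ hc) //; apply: lime_le; first exact: cvgP hc.
by apply: nearW => N; exact: EN_bound.
Qed.

Let p0 : 0 < p. Proof. by move: p1 => *; lra. Qed.

Lemma final_fin : (wmeas alpha sigma
   [set z | @Hplane R z /\ (lambda%:E < dyadic_max beta alpha gamma sigma f z)%E]
   <= 1%:E * ((lambda^-1)%:E * a0%:E) `^ ((2 + alpha) / (2 + alpha - gamma)))%E.
Proof.
rewrite mul1e -EFinM poweR_EFin -/p -(real_final R a0 lambda p a00 hl p0).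
exact: main_bound.
Qed.

End Main.

Theorem proposition4p2 (R : realType) (alpha gamma beta : R)
  (sigma : R * R -> R) :
  -1 < alpha -> 0 <= gamma -> gamma < 2 + alpha ->
  (beta = 0 \/ beta = 1 / 3) ->
  weight sigma ->
  exists C : R, 0 < C /\
    forall (f : R * R -> R) (lambda : R),
      measurable_fun (@Hplane R) f -> 0 < lambda ->
      (wmeas alpha sigma
         [set z | @Hplane R z /\ lambda%:E < dyadic_max beta alpha gamma sigma f z]
       <= C%:E * ((lambda^-1)%:E * wint alpha sigma (@Hplane R) (fun z => `|f z|%R))
                 `^ ((2 + alpha) / (2 + alpha - gamma)))%E.
Proof.
move=> ha hg0 hg hb ws; exists 1; split => // f lambda mf hl.
have A0 : (0 <= wint alpha sigma (@Hplane R) (fun z => `|f z|%R))%E.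
  apply: integral_ge0 => z Hz.
  exact: (@integrand_ge0 R alpha sigma ws (fun z => `|f z|%R)).
have pp : 0 < (2 + alpha) / (2 + alpha - gamma).
  by apply: divr_gt0; move: ha hg0 hg => *; lra.
case HA: (wint alpha sigma (@Hplane R) (fun z => `|f z|%R)) A0 => [a0| |] // a00.
  by apply: final_fin.
rewrite gt0_muley ?lte_fin ?invr_gt0 // poweRyr ?gt_eqF // mul1e; exact: leey.
Qed.
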